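(* Fix $k\in\mathbb{Z}_{\geq 1}$ and a set of patterns $B\subseteq\mathcal S$ such that $\mathrm{Av}(B)$ is nonempty and closed under $\oplus$ or closed under $\ominus$. Then the overlap graph $\mathcal{O}v(k,\mathrm{Av}(B))$ is strongly connected and its cycle polytope satisfies $\dim P(\mathcal{O}v(k,\mathrm{Av}(B)))=|\mathrm{Av}_k(B)|-|\mathrm{Av}_{k-1}(B)|$. In particular this holds for $B=\{\tau\}$, for any single pattern $\tau\in\mathcal S$.
   Context: For $n\ge1$, $\mathcal S_n$ is the set of permutations of $[n]$ in one-line notation, $\mathcal S=\bigcup_{n\ge1}\mathcal S_n$; by convention $\mathrm{Av}_0(B)$ consists of the empty permutation. For distinct reals $x_1,\dots,x_m$, $\mathrm{std}(x_1,\dots,x_m)$ is the unique $\pi\in\mathcal S_m$ with $\pi(i)<\pi(j)\iff x_i<x_j$; for $I=\{i_1<\dots<i_m\}$, $\mathrm{pat}_I(\sigma)=\mathrm{std}(\sigma(i_1),\dots,\sigma(i_m))$. $\sigma$ avoids $\pi$ if no $I$ has $\mathrm{pat}_I(\sigma)=\pi$. $\mathrm{Av}_n(B)$ is the set of permutations of size $n$ avoiding every element of $B$, $\mathrm{Av}(B)=\bigcup_{n\ge1}\mathrm{Av}_n(B)$. Overlap graph: $\mathcal{O}v(k,\mathrm{Av}(B))$ is the directed multigraph with vertex set $\mathrm{Av}_{k-1}(B)$ and, for each $\pi\in\mathrm{Av}_k(B)$, one edge labelled $\pi$ from $\mathrm{pat}_{\{1,\dots,k-1\}}(\pi)$ to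 $\mathrm{pat}_{\{2,\dots,k\}}(\pi)$. A simple cycle is a closed walk with distinct edges and distinct vertices; for a nonempty cycle $\mathcal C$, $\vec e_{\mathcal C}\in\mathbb R^{E}$ has $e$-coordinate (number of occurrences of $e$ in $\mathcal C$)$/|\mathcal C|$; the cycle polytope is $P(G)=\mathrm{conv}\{\vec e_{\mathcal C}:\mathcal C\text{ simple cycle of }G\}$. Direct sum $\tau\oplus\sigma=\tau(1)\cdots\tau(m)(\sigma(1)+m)\cdots(\sigma(n)+m)$ for $\tau\in\mathcal S_m,\sigma\in\mathcal S_n$; skew sum $\tau\ominus\sigma=(\tau(1)+n)\cdots(\tau(m)+n)\sigma(1)\cdots\sigma(n)$. Dimension of a polytope means dimension of its affine hull. *)

(* Defs.v *)
From HB Require Import structures.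
From mathcomp Require Import all_boot all_order all_algebra.
From mathcomp Require Import boolp.
Set Implicit Arguments. Unset Strict Implicit. Unset Printing Implicit Defensive.
Import Order.TTheory GRing.Theory Num.Theory.

Definition is_perm (s : seq nat) : bool := perm_eq s (iota 1 (size s)).

(* std(x_1..x_m): replace each entry by its rank (values assumed distinct). *)
Definition std (s : seq nat) : seq nat :=
  [seq (count (fun y => y < x) s).+1 | x <- s].

(* sigma contains pi: some index set I (a bit mask) with pat_I(sigma) = pi. *)
Definition contains (sigma pi : seq nat) : Prop :=
  exists m : bitseq, size m = size sigma /\ std (mask m sigma) = pi.

Definition avoids_all (B : seq nat -> Prop) (sigma : seq nat) : Prop :=
  forall pi, B pi -> ~ contains sigma pi.

(* Av_n(B), as a duplicate-free list; Av_0(B) = [:: [::]]. *)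
Definition Av (B : seq nat -> Prop) (n : nat) : seq (seq nat) :=
  [seq s <- permutations (iota 1 n) | `[< avoids_all B s >]].

Definition inAv (B : seq nat -> Prop) (s : seq nat) : Prop :=
  [/\ 0 < size s, is_perm s & avoids_all B s].

Definition dsum (t s : seq nat) : seq nat := t ++ [seq x + size t | x <- s].
Definition ssum (t s : seq nat) : seq nat := [seq x + size s | x <- t] ++ s.

Definition closed_dsum B := forall t s, inAv B t -> inAv B s -> inAv B (dsum t s).
Definition closed_ssum B := forall t s, inAv B t -> inAv B s -> inAv B (ssum t s).

(* Overlap graph Ov(k, Av(B)): vertices Av_{k-1}(B), one edge per pi in Av_k(B),
   from pat_{1..k-1}(pi) to pat_{2..k}(pi).  Edges are identified with labels. *)
Definition ov_src (k : nat) (e : seq nat) : seq nat := std (take k.-1 e).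
Definition ov_tgt (e : seq nat) : seq nat := std (drop 1 e).

Fixpoint is_walk (k : nat) (u : seq nat) (w : seq (seq nat)) (v : seq nat) : bool :=
  match w with
  | [::] => u == v
  | e :: w' => (ov_src k e == u) && is_walk k (ov_tgt e) w' v
  end.

Definition ov_strongly_connected (B : seq nat -> Prop) (k : nat) : Prop :=
  forall u v, u \in Av B k.-1 -> v \in Av B k.-1 ->
    exists w : seq (seq nat), all (mem (Av B k)) w && is_walk k u w v.

Definition simple_cycle (B : seq nat -> Prop) (k : nat) (w : seq (seq nat)) : bool :=
  match w with
  | [::] => false
  | e :: _ => [&& all (mem (Av B k)) w, is_walk k (ov_src k e) w (ov_src k e),
               uniq w & uniq [seq ov_src k f | f <- w]]
  end.

Local Open Scope ring_scope.

(* \vec e_C in R^E, E = Av_k(B) indexed by position in the list Av B k *)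
Definition cycle_vec (R : realFieldType) (B : seq nat -> Prop) (k : nat)
  (w : seq (seq nat)) : 'rV[R]_(size (Av B k)) :=
  \row_(i < size (Av B k)) ((count_mem (nth [::] (Av B k) i) w)%:R / (size w)%:R).

Definition conv (R : realFieldType) (N : nat) (S : 'rV[R]_N -> Prop) (x : 'rV[R]_N) : Prop :=
  exists (n : nat) (p : 'I_n -> 'rV[R]_N) (l : 'I_n -> R),
    [/\ forall i, S (p i), forall i, 0 <= l i, \sum_i l i = 1
      & x = \sum_i l i *: p i].

Definition cycle_polytope (R : realFieldType) (B : seq nat -> Prop) (k : nat)
  : 'rV[R]_(size (Av B k)) -> Prop :=
  @conv R (size (Av B k)) (fun x => exists w, simple_cycle B k w /\ x = @cycle_vec R B k w).

Definition aff_indep (R : realFieldType) (N d : nat) (x : 'I_d.+1 -> 'rV[R]_N) : bool :=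
  row_free (\matrix_(i < d) (x (lift ord0 i) - x ord0)).

(* X has affine dimension d: d is the maximal number such that X contains d+1
   affinely independent points (= dimension of the affine hull of X). *)
Definition is_affdim (R : realFieldType) (N : nat) (X : 'rV[R]_N -> Prop) (d : nat) : Prop :=
  (exists x : 'I_d.+1 -> 'rV[R]_N, (forall i, X (x i)) /\ aff_indep x) /\
  (forall (e : nat) (x : 'I_e.+1 -> 'rV[R]_N),
      (forall i, X (x i)) -> aff_indep x -> (e <= d)%N).

Definition ov_conclusion (R : realFieldType) (B : seq nat -> Prop) (k : nat) : Prop :=
  ov_strongly_connected B k /\
  exists d : nat, @is_affdim R (size (Av B k)) (@cycle_polytope R B k) d /\
    (d%:Z = (size (Av B k))%:Z - (size (Av B k.-1))%:Z)%R.

(* Main.v *)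
Require Import Defs.
From HB Require Import structures.
From mathcomp Require Import all_boot all_order all_algebra.
From mathcomp Require Import boolp zify lra.
Set Implicit Arguments. Unset Strict Implicit. Unset Printing Implicit Defensive.

Ltac lia' := change (Equality.sort Datatypes_nat__canonical__eqtype_Equality) with nat in *; lia.

Definition rk (s : seq nat) (x : nat) := (count (fun y => y < x) s).+1.

Lemma stdE s : std s = map (rk s) s.
Proof. by []. Qed.

Lemma count_lt_pred1 x y s : x < y ->
  count (fun z => z < x) s + count (pred1 x) s <= count (fun z => z < y) s.
Proof.
move=> xy; elim: s => //= z s IH.
have: (z < x) + (z == x) <= (z < y).
  case: (ltngtP z x) => [zx|xz|->]; rewrite ?xy //=; last first.
  by rewrite (ltn_trans zx xy).
lia.
Qed.

Lemma rk_lt s x y : x \in s -> x < y -> rk s x < rk s y.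
Proof.
move=> xs xy; rewrite /rk ltnS.
have := count_lt_pred1 s xy.
have : 0 < count (pred1 x) s by rewrite -has_count has_pred1.
lia.
Qed.

Lemma rk_mono s : {in s &, {mono rk s : x y / x < y}}.
Proof.
move=> x y xs ys; case: (ltngtP x y) => [xy|yx|->].
- by rewrite rk_lt.
- by apply/negbTE; rewrite -leqNgt ltnW // rk_lt.
- by rewrite ltnn.
Qed.

Lemma std_map_mono f t : {in t &, {mono f : x y / x < y}} -> std (map f t) = std t.
Proof.
move=> fm; rewrite /std -map_comp; apply/eq_in_map => x xt /=.
rewrite count_map; congr S; apply: eq_in_count => y yt /=.
by rewrite fm.
Qed.

Lemma std_sub s t : {subset t <= s} -> std (map (rk s) t) = std t.
Proof.
move=> ts; apply: std_map_mono => x y xt yt; apply: rk_mono; exact: ts.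
Qed.

Lemma std_take n s : std (take n (std s)) = std (take n s).
Proof. by rewrite [std s]stdE -map_take std_sub // => x; apply: mem_take. Qed.

Lemma std_drop n s : std (drop n (std s)) = std (drop n s).
Proof. by rewrite [std s]stdE -map_drop std_sub // => x; apply: mem_drop. Qed.

Lemma std_mask m s : std (mask m (std s)) = std (mask m s).
Proof. by rewrite [std s]stdE -map_mask std_sub // => x; apply: mem_mask. Qed.

Lemma size_std s : size (std s) = size s.
Proof. by rewrite size_map. Qed.

Lemma std_perm t : uniq t -> perm_eq (std t) (iota 1 (size t)).
Proof.
move=> ut.
have inj : {in t &, injective (rk t)}.
  move=> x y xt yt e; apply/eqP; rewrite eqn_leq leqNgt [y <= _]leqNgt.
  by rewrite -(rk_mono xt yt) -(rk_mono yt xt) e ltnn.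
have us : uniq (std t) by rewrite stdE map_inj_in_uniq.
have sub : {subset std t <= iota 1 (size t)}.
  move=> z /mapP [x xt ->]; rewrite mem_iota /rk /=.
  have := count_predUI (fun y => y < x) (pred1 x) t.
  have -> : count (predI (fun y => y < x) (pred1 x)) t = 0.
    by apply/eqP; rewrite -leqn0 leqNgt -has_count; apply/hasPn => y _ /=; apply/negP => /andP [lt /eqP e]; by rewrite e ltnn in lt.
  have := count_size (predU (fun y => y < x) (pred1 x)) t.
  have : 0 < count (pred1 x) t by rewrite -has_count has_pred1.
  move: (count _ t) (count (pred1 x) t) (count (predU _ _) t) (size t) => a b c d.
  lia.
have sz : size (iota 1 (size t)) <= size (std t) by rewrite size_iota size_std.
have [_ eqm] := uniq_min_size us sub sz.
by apply: uniq_perm => //; apply: iota_uniq.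
Qed.

Lemma count_lt_iota x a n : count (fun y => y < x) (iota a n) = minn (x - a) n.
Proof.
elim: n a => [|n IH] a /=; first by rewrite minn0.
rewrite IH; case: (ltnP a x) => ax /=; lia.
Qed.

Lemma std_id u n : perm_eq u (iota 1 n) -> std u = u.
Proof.
move=> pu; rewrite stdE -[RHS]map_id; apply/eq_in_map => x xu.
rewrite /rk (permP pu) count_lt_iota.
move: xu; rewrite (perm_mem pu) mem_iota; lia.
Qed.

Lemma containsP sigma pi :
  contains sigma pi <-> exists t, subseq t sigma /\ std t = pi.
Proof.
split.
- by move=> [m [_ <-]]; exists (mask m sigma); rewrite mask_subseq.
- move=> [t [/subseqP [m sm ->] <-]]; by exists m.
Qed.

Lemma avoids_sub B sigma t : avoids_all B sigma -> subseq t sigma ->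
  avoids_all B (std t).
Proof.
move=> av ts pi Bp /containsP [t' [/subseqP [m _ ->] E]]; subst pi.
apply: (av _ Bp); apply/containsP; exists (mask m t); split.
  exact: subseq_trans (mask_subseq _ _) ts.
by rewrite std_mask.
Qed.

Lemma mem_Av B n s : (s \in Av B n) <-> perm_eq s (iota 1 n) /\ avoids_all B s.
Proof.
rewrite /Av mem_filter mem_permutations; split.
- by move=> /andP [/asboolP a p].
- by move=> [p a]; rewrite p andbT; apply/asboolP.
Qed.

Lemma Av_uniq B n : uniq (Av B n).
Proof. by rewrite filter_uniq // permutations_uniq. Qed.

Lemma perm_iota_uniq s n : perm_eq s (iota 1 n) -> uniq s.
Proof. by move=> p; rewrite (perm_uniq p) iota_uniq. Qed.

Lemma std_in_Av B sigma t n : uniq sigma -> avoids_all B sigma -> subseq t sigma ->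
  size t = n -> std t \in Av B n.
Proof.
move=> us av ts <-; apply/mem_Av; split; last exact: avoids_sub av ts.
apply: std_perm; exact: subseq_uniq ts us.
Qed.

Lemma src_Av B k e : e \in Av B k -> ov_src k e \in Av B k.-1.
Proof.
move=> /mem_Av [p av]; have ue := perm_iota_uniq p.
apply: std_in_Av ue av (take_subseq _ _) _.
rewrite size_takel // (perm_size p) size_iota; lia.
Qed.

Lemma tgt_Av B k e : e \in Av B k -> ov_tgt e \in Av B k.-1.
Proof.
move=> /mem_Av [p av]; have ue := perm_iota_uniq p.
apply: std_in_Av ue av (drop_subseq _ _) _.
rewrite size_drop (perm_size p) size_iota; lia.
Qed.

Definition win (k : nat) (sigma : seq nat) (i : nat) := std (take k (drop i sigma)).

Lemma walk_windows n sigma j i :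
  is_walk n.+1 (std (take n (drop i sigma))) [seq win n.+1 sigma l | l <- iota i j]
    (std (take n (drop (i + j) sigma))).
Proof.
elim: j i => [|j IH] i /=; first by rewrite addn0.
apply/andP; split.
  by rewrite /ov_src /win /= std_take take_takel.
rewrite /ov_tgt /win std_drop -addSnnS.
have -> : drop 1 (take n.+1 (drop i sigma)) = take n (drop i.+1 sigma).
  have -> : drop i.+1 sigma = drop 1 (drop i sigma) by rewrite drop_drop add1n.
  by rewrite (take_drop n 1) addn1.
exact: IH.
Qed.

Lemma std_shift c v : std [seq x + c | x <- v] = std v.
Proof. by apply: std_map_mono => x y _ _; rewrite ltn_add2r. Qed.

Lemma inAv_uniq B s : inAv B s -> uniq s.
Proof. by case=> _ p _; exact: perm_iota_uniq p. Qed.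

Lemma Av_inAv B n s : 0 < n -> s \in Av B n -> inAv B s.
Proof.
move=> n0 /mem_Av [p av]; split => //; first by rewrite (perm_size p) size_iota.
by rewrite /is_perm (perm_size p) size_iota.
Qed.

Lemma inAv_Av B s : inAv B s -> s \in Av B (size s).
Proof. by case=> _ p av; apply/mem_Av. Qed.

Lemma Av_size B n s : s \in Av B n -> size s = n.
Proof. by move=> /mem_Av [p _]; rewrite (perm_size p) size_iota. Qed.

Lemma Av_std B n s : s \in Av B n -> std s = s.
Proof. by move=> /mem_Av [p _]; exact: std_id p. Qed.

Lemma win_Av B k sigma l : inAv B sigma -> l + k <= size sigma ->
  win k sigma l \in Av B k.
Proof.
move=> hs hl; apply: std_in_Av (inAv_uniq hs) _ _ _.
- by case: hs.
- exact: subseq_trans (take_subseq _ _) (drop_subseq _ _).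
- rewrite size_takel // size_drop; move: hl; set m := size sigma; lia.
Qed.

Lemma strong_conn B k : 1 <= k -> closed_dsum B \/ closed_ssum B ->
  ov_strongly_connected B k.
Proof.
move=> k1 cl u v uA vA.
case: k k1 uA vA => [//|[|n]] _ uA vA.
  have u0 := Av_size uA; have v0 := Av_size vA.
  exists [::]; move: u0 v0; case: u {uA} => //; case: v {vA} => //.
have su := Av_size uA; have sv := Av_size vA.
have hu : inAv B u by apply: Av_inAv uA.
have hv : inAv B v by apply: Av_inAv vA.
have [sigma [hs s1 s2 ssz]] : exists sigma, [/\ inAv B sigma,
    std (take n.+1 (drop 0 sigma)) = u, std (take n.+1 (drop (0 + n.+1) sigma)) = v
    & size sigma = n.+1 + n.+1].
  case: cl => cl.
  - exists (dsum u v); split.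
    + exact: cl.
    + by rewrite drop0 /dsum take_size_cat // (Av_std uA).
    + rewrite add0n /dsum drop_size_cat // take_oversize; last by rewrite size_map sv.
      by rewrite std_shift (Av_std vA).
    + by rewrite /dsum size_cat size_map su sv.
  - exists (ssum u v); split.
    + exact: cl.
    + by rewrite drop0 /ssum take_size_cat ?size_map // std_shift (Av_std uA).
    + rewrite add0n /ssum drop_size_cat ?size_map // take_oversize; last by rewrite sv.
      by rewrite (Av_std vA).
    + by rewrite /ssum size_cat size_map su sv.
exists [seq win n.+2 sigma l | l <- iota 0 n.+1]; apply/andP; split.
  apply/allP => e /mapP [l]; rewrite mem_iota => hl ->.
  apply: win_Av hs _; rewrite ssz; lia.
by rewrite -{1}s1 -s2; apply: walk_windows.
Qed.

Lemma map_add_iota c a n : [seq x + c | x <- iota a n] = iota (a + c) n.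
Proof. by elim: n a => [|n IH] a //=; rewrite IH addSn. Qed.

Lemma perm_dsum t s : is_perm t -> is_perm s -> is_perm (dsum t s).
Proof.
rewrite /is_perm /dsum size_cat size_map iotaD => pt ps.
by rewrite perm_cat // (perm_size pt) size_iota -map_add_iota (perm_map _ ps).
Qed.

Lemma perm_ssum t s : is_perm t -> is_perm s -> is_perm (ssum t s).
Proof.
rewrite /is_perm /ssum size_cat size_map addnC iotaD => pt ps.
rewrite perm_catC perm_cat //.
by rewrite (perm_size ps) size_iota -map_add_iota (perm_map _ pt).
Qed.

Lemma perm_mem_bound s x : is_perm s -> x \in s -> 0 < x <= size s.
Proof. by move=> p; rewrite (perm_mem p) mem_iota; lia'. Qed.

Definition decP (tau : seq nat) := exists p, 0 < p < size tau /\
  forall i j, i < p -> p <= j -> j < size tau -> nth 0 tau i < nth 0 tau j.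
Definition decM (tau : seq nat) := exists p, 0 < p < size tau /\
  forall i j, i < p -> p <= j -> j < size tau -> nth 0 tau j < nth 0 tau i.

Lemma not_both tau : decP tau -> decM tau -> False.
Proof.
move=> [p [hp H1]] [q [hq H2]].
have := H1 0 (size tau).-1; have := H2 0 (size tau).-1.
have a1 : 0 < q by lia'.
have a2 : q <= (size tau).-1 by lia'.
have a3 : (size tau).-1 < size tau by lia'.
have b1 : 0 < p by lia'.
have b2 : p <= (size tau).-1 by lia'.
move=> /(_ a1 a2 a3) h1 /(_ b1 b2 a3) h2; lia'.
Qed.

Lemma nth_std_lt X i j : i < size X -> j < size X -> nth 0 X i < nth 0 X j ->
  nth 0 (std X) i < nth 0 (std X) j.
Proof.
move=> hi hj lt; rewrite stdE (nth_map 0) // (nth_map 0) //.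
by apply: rk_lt lt; rewrite mem_nth.
Qed.

Lemma mask_split (m : bitseq) (t s : seq nat) : size m = size t + size s ->
  mask m (t ++ s) = mask (take (size t) m) t ++ mask (drop (size t) m) s.
Proof.
move=> sm; rewrite -{1}(cat_take_drop (size t) m) mask_cat // size_takel //; lia'.
Qed.

Lemma dsum_closed tau : ~ decP tau -> closed_dsum (fun b => b = tau).
Proof.
move=> nd t s [t0 pt avt] [s0 ps avs]; split.
- by rewrite /dsum size_cat; lia'.
- exact: perm_dsum.
move=> pi -> [m [sm eq]].
move: sm eq; rewrite /dsum size_cat size_map => sm.
rewrite mask_split ?size_map // -map_mask.
set a := mask _ t; set b := mask _ s => eq.
have sm1 : size (take (size t) m) = size t by rewrite size_takel //; lia'.
have sm2 : size (drop (size t) m) = size s by rewrite size_drop; lia'.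
case: (posnP (size a)) => [/size0nil a0|apos].
  apply: (avs tau erefl); exists (drop (size t) m); split => //.
  by rewrite -eq a0 /= std_shift.
case: (posnP (size b)) => [/size0nil b0|bpos].
  apply: (avt tau erefl); exists (take (size t) m); split => //.
  by rewrite -eq b0 /= cats0.
apply: nd; exists (size a); rewrite -eq size_std size_cat size_map; split.
  by apply/andP; split => //; rewrite -addn1 leq_add2l.
move=> i j hi hj1 hj2; apply: nth_std_lt; rewrite ?size_cat ?size_map //; try lia'.
rewrite !nth_cat hi [in X in _ < X]ifF; last by apply/negbTE; rewrite -leqNgt.
rewrite (nth_map 0); last by lia'.
have ha : nth 0 a i \in t by apply: (mem_mask (m:=take (size t) m)); rewrite mem_nth.
have hb : nth 0 b (j - size a) \in s.
  by apply: (mem_mask (m:=drop (size t) m)); rewrite mem_nth //; lia'.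
have := perm_mem_bound pt ha; have := perm_mem_bound ps hb; lia'.
Qed.

Lemma ssum_closed tau : ~ decM tau -> closed_ssum (fun b => b = tau).
Proof.
move=> nd t s [t0 pt avt] [s0 ps avs]; split.
- by rewrite /ssum size_cat; lia'.
- exact: perm_ssum.
move=> pi -> [m [sm eq]].
move: sm eq; rewrite /ssum size_cat size_map => sm.
rewrite mask_split ?size_map // -map_mask.
set a := mask _ t; set b := mask _ s => eq.
have sm1 : size (take (size t) m) = size t by rewrite size_takel //; lia'.
have sm2 : size (drop (size t) m) = size s by rewrite size_drop; lia'.
case: (posnP (size a)) => [/size0nil a0|apos].
  apply: (avs tau erefl); exists (drop (size t) m); split => //.
  by rewrite -eq a0.
case: (posnP (size b)) => [/size0nil b0|bpos].
  apply: (avt tau erefl); exists (take (size t) m); split => //.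
  by rewrite -eq b0 /= cats0 std_shift.
apply: nd; exists (size a); rewrite -eq size_std size_cat size_map; split.
  by apply/andP; split => //; rewrite -addn1 leq_add2l.
move=> i j hi hj1 hj2; apply: nth_std_lt; rewrite ?size_cat ?size_map //; try lia'.
rewrite !nth_cat size_map hi [in X in X < _]ifF; last by apply/negbTE; rewrite -leqNgt.
rewrite (nth_map 0); last by lia'.
have ha : nth 0 a i \in t by apply: (mem_mask (m:=take (size t) m)); rewrite mem_nth.
have hb : nth 0 b (j - size a) \in s.
  by apply: (mem_mask (m:=drop (size t) m)); rewrite mem_nth //; lia'.
have := perm_mem_bound pt ha; have := perm_mem_bound ps hb; lia'.
Qed.

Lemma single_closed tau : closed_dsum (fun b => b = tau) \/ closed_ssum (fun b => b = tau).
Proof.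
case: (EM (decP tau)) => h.
  right; apply: ssum_closed => h'; exact: not_both h h'.
by left; apply: dsum_closed.
Qed.

Lemma one_inAv B : (exists s, inAv B s) -> inAv B [:: 1].
Proof.
move=> [s hs]; have := hs; case=> s0 ps avs.
case: s s0 ps avs hs => // x s _ ps avs hs.
have sx : subseq [:: x] (x :: s) by rewrite sub1seq mem_head.
have := avoids_sub avs sx; rewrite /std /= ltnn => av.
by split.
Qed.

Lemma exists_size B : closed_dsum B \/ closed_ssum B -> inAv B [:: 1] ->
  forall m, 0 < m -> exists sigma, inAv B sigma /\ size sigma = m.
Proof.
move=> cl h1; elim=> [//|[|m] IH] _; first by exists [:: 1].
have [sigma [hs sz]] := IH erefl.
case: cl => cl.
- exists (dsum sigma [:: 1]); split; first exact: cl.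
  by rewrite /dsum size_cat sz /= addn1.
- exists (ssum sigma [:: 1]); split; first exact: cl.
  by rewrite /ssum size_cat size_map sz /= addn1.
Qed.

Lemma Av_nonempty B : (forall b, B b -> 0 < size b /\ is_perm b) ->
  closed_dsum B \/ closed_ssum B -> (exists s, inAv B s) ->
  forall m, exists s, s \in Av B m.
Proof.
move=> hB cl ex [|m].
  exists [::]; apply/mem_Av; split => // pi Bp /containsP [t [ts E]].
  move: ts; rewrite subseq0 => /eqP tnil; subst t.
  by case: (hB _ Bp); rewrite -E.
have [sigma [hs sz]] := exists_size cl (one_inAv ex) (erefl : 0 < m.+1).
by exists sigma; rewrite -sz; apply: inAv_Av.
Qed.

Import Order.TTheory GRing.Theory Num.Theory.

Lemma walk_cat k u a m b v : is_walk k u a m -> is_walk k m b v -> is_walk k u (a ++ b) v.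
Proof.
elim: a u => [|e a IH] u /=; first by move=> /eqP -> .
by move=> /andP [-> h1] h2; rewrite IH.
Qed.

Lemma walk_split k u w v i : is_walk k u w v -> i < size w ->
  is_walk k u (take i w) (ov_src k (nth [::] w i)) &&
  is_walk k (ov_src k (nth [::] w i)) (drop i w) v.
Proof.
elim: w u i => [//|e w IH] u [|i] /=.
  by move=> /andP [/eqP eu h] _; rewrite /= eu !eqxx h.
by move=> /andP [-> h] hi; apply: IH.
Qed.

Lemma walk_count k u w v x : is_walk k u w v ->
  count (fun f => ov_tgt f == x) w + (u == x) = count (fun f => ov_src k f == x) w + (v == x).
Proof.
elim: w u => [|e w IH] u /=; first by move=> /eqP ->.
move=> /andP [/eqP eu h]; have := IH _ h; rewrite eu; lia.
Qed.

Lemma ex_idx (s : seq (seq nat)) y : y \in s -> exists j : 'I_(size s), nth [::] s j = y.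
Proof. by move=> ys; exists (Ordinal (etrans (index_mem y s) ys)) => /=; rewrite nth_index. Qed.

Local Open Scope ring_scope.

Lemma sum_idx (R : nzRingType) (s : seq (seq nat)) (j : 'I_(size s)) (F : 'I_(size s) -> R) :
  uniq s -> \sum_(i < size s) F i * (nth [::] s j == nth [::] s i)%:R = F j.
Proof.
move=> us; rewrite (bigD1 j) //= eqxx mulr1 big1 ?addr0 // => i ij.
rewrite nth_uniq //; have -> : (j == i :> nat) = false by apply/negbTE; rewrite eq_sym.
by rewrite mulr0.
Qed.

Lemma sum_idx' (R : comNzRingType) (s : seq (seq nat)) (j : 'I_(size s)) (F : 'I_(size s) -> R) :
  uniq s -> \sum_(i < size s) (nth [::] s j == nth [::] s i)%:R * F i = F j.
Proof.
move=> us; rewrite -[RHS](@sum_idx R s j F us); apply: eq_bigr => i _; exact: mulrC.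
Qed.

Lemma sum_count_seq (R : nzRingType) (P : pred (seq nat)) w :
  \sum_(f <- w) ((P f)%:R : R) = (count P w)%:R.
Proof. by elim: w => [|f w IH]; rewrite ?big_nil ?big_cons //= IH natrD. Qed.

Section Graph.
Variable R : realFieldType.
Variables (B : seq nat -> Prop) (k : nat).

Local Notation Es := (Av B k).
Local Notation Vs := (Av B k.-1).
Local Notation nE := (size (Av B k)).
Local Notation nV := (size (Av B k.-1)).
Local Notation E i := (nth [::] (Av B k) i).
Local Notation V i := (nth [::] (Av B k.-1) i).

Definition Nmx : 'M[R]_(nV, nE) :=
  \matrix_(v < nV, e < nE) ((ov_tgt (E e) == V v)%:R - (ov_src k (E e) == V v)%:R).

Definition cnt (w : seq (seq nat)) : 'rV[R]_nE := \row_i (count_mem (E i) w)%:R.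

Lemma sumE w (g : seq nat -> R) : all (mem Es) w ->
  \sum_(i < nE) (count_mem (E i) w)%:R * g (E i) = \sum_(f <- w) g f.
Proof.
elim: w => [|f w IH] /=.
  by move=> _; rewrite big_nil big1 // => i _; rewrite mul0r.
move=> /andP [fE wE]; rewrite big_cons -IH //.
have [j Ej] := ex_idx fE.
rewrite -Ej -(@sum_idx' R Es j (fun i => g (E i)) (Av_uniq B k)) -big_split /=.
by apply: eq_bigr => i _; rewrite natrD mulrDl.
Qed.

Lemma cnt_cat a b : cnt (a ++ b) = cnt a + cnt b.
Proof. by apply/rowP => i; rewrite !mxE count_cat natrD. Qed.

Lemma cnt_N w u : all (mem Es) w -> is_walk k u w u -> cnt w *m Nmx^T = 0.
Proof.
move=> wE hw; apply/rowP => v; rewrite !mxE.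
under eq_bigr => i _ do rewrite !mxE.
rewrite (@sumE w (fun f => (ov_tgt f == V v)%:R - (ov_src k f == V v)%:R)) // big_split /= sumrN !sum_count_seq.
by have := walk_count (V v) hw; rewrite addnC [X in _ = X]addnC => /addnI ->; rewrite subrr.
Qed.

Lemma cnt_one w : all (mem Es) w -> cnt w *m (const_mx 1 : 'cV[R]_nE) = (size w)%:R%:M.
Proof.
move=> wE; apply/matrixP => i j; rewrite !mxE (ord1 i) (ord1 j) eqxx mulr1n.
under eq_bigr => l _ do rewrite !mxE.
rewrite (@sumE w (fun _ => 1)) // -(@sum_count_seq R predT) /= ; by [].
Qed.

Lemma cycle_vecE w : @cycle_vec R B k w = (size w)%:R^-1 *: cnt w.
Proof. by apply/rowP => i; rewrite !mxE mulrC. Qed.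

Definition onecol : 'cV[R]_nE := const_mx 1.

Definition goodpt (x : 'rV[R]_nE) := x *m Nmx^T = 0 /\ x *m onecol = 1%:M.

Lemma simple_good w : simple_cycle B k w -> goodpt (@cycle_vec R B k w).
Proof.
case: w => [//|e w] /and4P [wE hw _ _].
rewrite cycle_vecE; split.
  by rewrite -scalemxAl (cnt_N wE hw) scaler0.
rewrite -scalemxAl (cnt_one wE) scale_scalar_mx.
by rewrite mulVf // pnatr_eq0.
Qed.

Lemma poly_good x : @cycle_polytope R B k x -> goodpt x.
Proof.
move=> [n [p [l [hp hl hs ->]]]]; split.
  rewrite mulmx_suml big1 // => i _.
  have [w [sw ->]] := hp i; have [h _] := simple_good sw.
  by rewrite -scalemxAl h scaler0.
rewrite mulmx_suml (eq_bigr (fun i => l i *: 1%:M)).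
  by rewrite -scaler_suml hs scale1r.
move=> i _; have [w [sw ->]] := hp i; have [_ h] := simple_good sw.
by rewrite -scalemxAl h.
Qed.

Hypothesis hsc : ov_strongly_connected B k.
Hypothesis hE : exists e, e \in Av B k.

Lemma closed_walk_ex : exists w, [/\ all (mem Es) w, is_walk k (ov_src k (head [::] w)) w (ov_src k (head [::] w)) & (0 < size w)%N].
Proof.
have [e eE] := hE.
have [w' /andP [w'E hw']] := hsc (tgt_Av eE) (src_Av eE).
exists (e :: w'); split => //=; first by rewrite eE.
by rewrite eqxx.
Qed.

Definition aV (a : 'rV[R]_nV) (y : seq nat) := \sum_(i < nV) a 0 i * (y == V i)%:R.

Lemma aV_idx a (j : 'I_nV) : aV a (V j) = a 0 j.
Proof. by rewrite /aV sum_idx // Av_uniq. Qed.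

Lemma aNmx a (e : 'I_nE) : (a *m Nmx) 0 e = aV a (ov_tgt (E e)) - aV a (ov_src k (E e)).
Proof.
rewrite !mxE /aV -sumrB; apply: eq_bigr => i _; by rewrite !mxE mulrBr.
Qed.

Lemma aV_walk (a : 'rV[R]_nV) u w v : a *m Nmx = 0 -> all (mem Es) w -> is_walk k u w v -> aV a u = aV a v.
Proof.
move=> h0; elim: w u => [|f w IH] u /=; first by move=> _ /eqP ->.
move=> /andP [fE wE] /andP [/eqP <- hw].
have [j Ej] := ex_idx fE.
by rewrite -(IH _ wE hw); apply/eqP; rewrite eq_sym -subr_eq0 -Ej -aNmx h0 mxE eqxx.
Qed.

Lemma ker_const (a : 'rV[R]_nV) : a *m Nmx = 0 -> forall j0 : 'I_nV, a = a 0 j0 *: const_mx 1.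
Proof.
move=> h0 j0; apply/rowP => j; rewrite !mxE mulr1 -!aV_idx.
have [w /andP [wE hw]] := hsc (mem_nth [::] (ltn_ord j)) (mem_nth [::] (ltn_ord j0)).
exact: aV_walk h0 wE hw.
Qed.

Definition Mt : 'M[R]_(nV + 1, nE) := col_mx Nmx onecol^T.

Lemma rank_Mt : (nV <= \rank Mt)%N.
Proof.
have [w [wE hw wpos]] := closed_walk_ex.
set q := (cnt w)^T.
have Nq : Nmx *m q = 0 by rewrite /q -[Nmx]trmxK -trmx_mul (cnt_N wE hw) trmx0.
have oq : onecol^T *m q = (size w)%:R%:M by rewrite /q -trmx_mul (cnt_one wE) tr_scalar_mx.
case: (posnP nV) => [n0|nVpos]; first by rewrite [X in (X <= _)%N]n0.
set j0 : 'I_nV := Ordinal nVpos.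
set z0 : 'rV[R]_(nV + 1) := row_mx (const_mx 1) 0.
have kz : (kermx Mt <= z0)%MS.
  apply/row_subP => i; set z := row i _.
  have zM : z *m Mt = 0 by rewrite /z -row_mul mulmx_ker row0.
  rewrite -(hsubmxK z) /Mt mul_row_col in zM.
  have r0 : rsubmx z = 0.
    have := congr1 (mulmx^~ q) zM.
    rewrite mul0mx mulmxDl -!mulmxA Nq oq mulmx0 add0r mul_mx_scalar => /eqP.
    by rewrite scaler_eq0 pnatr_eq0 (negbTE (lt0n_neq0 wpos)) /= => /eqP.
  rewrite r0 mul0mx addr0 in zM.
  apply/sub_rVP; exists (lsubmx z 0 j0).
  have ez : z = row_mx (lsubmx z) 0 by rewrite -r0 hsubmxK.
  by rewrite {1}ez {1}(ker_const zM j0) /z0 scale_row_mx scaler0.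
have := mxrankS kz; rewrite mxrank_ker.
have := rank_leq_row z0; have := rank_leq_row Mt; lia.
Qed.

Lemma nV_le_nE : (nV <= nE)%N.
Proof. exact: leq_trans rank_Mt (rank_leq_col _). Qed.

Lemma upper e (x : 'I_e.+1 -> 'rV[R]_nE) :
  (forall i, goodpt (x i)) -> aff_indep x -> (e <= nE - nV)%N.
Proof.
move=> hx; rewrite /aff_indep; set D := \matrix_(i < e) _ => /eqP rD.
have DM : D *m Mt^T = 0.
  rewrite /Mt tr_col_mx trmxK mul_mx_row.
  have -> : D *m Nmx^T = 0.
    apply/row_matrixP => i; rewrite row_mul rowK row0 mulmxBl.
    by rewrite (proj1 (hx _)) (proj1 (hx _)) subrr.
  have -> : D *m onecol = 0.
    apply/row_matrixP => i; rewrite row_mul rowK row0 mulmxBl.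
    by rewrite (proj2 (hx _)) (proj2 (hx _)) subrr.
  by rewrite row_mx0.
have := mxrankS (introT sub_kermxP DM); rewrite mxrank_ker mxrank_tr rD.
have := rank_Mt; lia.
Qed.


Definition wsum (x : 'rV[R]_nE) w := \sum_(i < nE) (count_mem (E i) w)%:R * x 0 i.

Lemma wsum_cat x a b : wsum x (a ++ b) = wsum x a + wsum x b.
Proof.
rewrite /wsum -big_split; apply: eq_bigr => i _; by rewrite count_cat natrD mulrDl.
Qed.

Lemma wsum_nil x : wsum x [::] = 0.
Proof. by rewrite /wsum big1 // => i _; rewrite mul0r. Qed.

Lemma wsum1 x (e : 'I_nE) : wsum x [:: E e] = x 0 e.
Proof.
rewrite /wsum -[RHS](@sum_idx' R Es e (fun i => x 0 i) (Av_uniq B k)).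
by apply: eq_bigr => i _ /=; rewrite addn0.
Qed.

Definition ortho (x : 'rV[R]_nE) := forall w, simple_cycle B k w ->
  \sum_(i < nE) x 0 i * @cycle_vec R B k w 0 i = 0.

Lemma closed_zero x : ortho x -> forall n w u, (size w <= n)%N -> all (mem Es) w ->
  is_walk k u w u -> wsum x w = 0.
Proof.
move=> hx; elim=> [|n IH] w u.
  by rewrite leqn0 => /nilP -> _ _; exact: wsum_nil.
move=> sw wE hw.
case: (boolP (uniq (map (ov_src k) w))) => us.
  case: w us sw wE hw => [|e w'] us sw wE hw; first exact: wsum_nil.
  have eu : ov_src k e = u by case/andP: hw => /eqP.
  have sc : simple_cycle B k (e :: w').
    rewrite /simple_cycle wE eu hw us andbT /=.
    by have := map_uniq us.
  have := hx _ sc.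
  have -> : \sum_(i < nE) x 0 i * @cycle_vec R B k (e :: w') 0 i =
     (size (e :: w'))%:R^-1 * wsum x (e :: w').
    rewrite /wsum mulr_sumr; apply: eq_bigr => i _; rewrite !mxE.
    by rewrite mulrC mulrA [X in X * _]mulrC.
  by move/eqP; rewrite mulf_eq0 invr_eq0 pnatr_eq0 /= => /eqP.
have [i [j [ij jw eqij]]] := uniqPn (ov_src k [::]) us.
rewrite size_map in jw.
rewrite !(nth_map [::]) // in eqij; last exact: ltn_trans ij jw.
have iw : (i < size w)%N by exact: ltn_trans ij jw.
have /andP [h1 h2] := walk_split hw iw.
have jiw : (j - i < size (drop i w))%N by rewrite size_drop; move: ij jw; set m := size w; lia'.
have /andP [h3 h4] := walk_split h2 jiw.
have nd : nth [::] (drop i w) (j - i) = nth [::] w j by rewrite nth_drop; congr nth; lia'.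
rewrite nd -eqij in h3 h4.
have ew : w = take i w ++ (take (j - i) (drop i w) ++ drop (j - i) (drop i w)).
  by rewrite !cat_take_drop.
move: wE; rewrite ew !all_cat => /and3P [a1 a2 a3].
rewrite !wsum_cat.
have z2 : wsum x (take (j - i) (drop i w)) = 0.
  apply: IH a2 h3; rewrite size_take_min size_drop; move: sw jw ij; set m := size w; lia'.
have z13 : wsum x (take i w ++ drop (j - i) (drop i w)) = 0.
  apply: IH _ (walk_cat h1 h4); last by rewrite all_cat a1 a3.
  rewrite size_cat size_takel ?size_drop; last exact: ltnW.
  move: sw jw ij; set m := size w; lia'.
by rewrite z2 add0r; rewrite wsum_cat in z13.
Qed.

Lemma potential x : ortho x -> (0 < nV)%N -> exists phi : 'rV[R]_nV, x = phi *m Nmx.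
Proof.
move=> hx nVpos; set j0 : 'I_nV := Ordinal nVpos.
have hr : V j0 \in Vs by apply: mem_nth.
pose W (v : 'I_nV) := xchoose (hsc hr (mem_nth [::] (ltn_ord v))).
have WP v : all (mem Es) (W v) && is_walk k (V j0) (W v) (V v) := xchooseP (hsc hr (mem_nth [::] (ltn_ord v))).
exists (\row_v wsum x (W v)); apply/rowP => e; rewrite aNmx.
have eE : E e \in Es by apply: mem_nth.
have [jt Ejt] := ex_idx (tgt_Av eE).
have [js Ejs] := ex_idx (src_Av eE).
rewrite -Ejt -Ejs !aV_idx !mxE.
have [Rw /andP [RE hR]] := hsc (tgt_Av eE) hr.
have /andP [Wt hWt] := WP jt; have /andP [Ws hWs] := WP js.
have c1 : wsum x (W js ++ [:: E e] ++ Rw) = 0.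
  apply: (closed_zero hx (leqnn _) _ (u := V j0)).
    by rewrite !all_cat Ws /= eE.
  apply: walk_cat hWs _; rewrite /= Ejs eqxx /=; exact: hR.
have c2 : wsum x (W jt ++ Rw) = 0.
  apply: (closed_zero hx (leqnn _) _ (u := V j0)).
    by rewrite !all_cat Wt.
  by apply: walk_cat hWt _; rewrite Ejt.
move: c1 c2; rewrite !wsum_cat wsum1 => c1 c2.
lra.
Qed.

End Graph.

Import Order.TTheory GRing.Theory Num.Theory.
Local Open Scope ring_scope.

Section Lower.
Variable R : realFieldType.
Variables (B : seq nat -> Prop) (k : nat).
Hypothesis hsc : ov_strongly_connected B k.
Hypothesis hE : exists e, e \in Av B k.

Local Notation Es := (Av B k).
Local Notation Vs := (Av B k.-1).
Local Notation nE := (size (Av B k)).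
Local Notation nV := (size (Av B k.-1)).
Local Notation cv := (@cycle_vec R B k).

Definition Amx (S : seq (seq (seq nat))) : 'M[R]_(size S, nE) :=
  \matrix_(i < size S) cv (nth [::] S i).

Lemma rank_Nmx : (0 < nV)%N -> (\rank (Nmx R B k) <= nV - 1)%N.
Proof.
move=> nVpos; set o : 'rV[R]_nV := const_mx 1.
have oN : o *m Nmx R B k = 0.
  apply/rowP => e; rewrite aNmx mxE.
  have eE : nth [::] Es e \in Es by apply: mem_nth.
  have [jt Ejt] := ex_idx (tgt_Av eE).
  have [js Ejs] := ex_idx (src_Av eE).
  by rewrite -Ejt -Ejs !aV_idx !mxE subrr.
have o0 : o != 0.
  apply/eqP => /rowP /(_ (Ordinal nVpos)); rewrite !mxE => /eqP; by rewrite oner_eq0.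
have := mxrankS (introT sub_kermxP oN); rewrite mxrank_ker rank_rV o0.
have := rank_leq_row (Nmx R B k); lia.
Qed.

Lemma grow S : all (simple_cycle B k) S -> row_free (Amx S) ->
  (size S < nE - nV + 1)%N -> exists c, simple_cycle B k c /\ ~~ (cv c <= Amx S)%MS.
Proof.
move=> aS rf sz; case: (EM (exists c, simple_cycle B k c /\ ~~ (cv c <= Amx S)%MS)) => // hn.
have allsub c : simple_cycle B k c -> (cv c <= Amx S)%MS.
  by move=> sc; apply/negPn/negP => h; apply: hn; exists c.
have nVpos : (0 < nV)%N.
  have [e eE] := hE; have := src_Av eE; case: (Av B k.-1) => //.
set K := kermx (Amx S)^T.
have KN : (K <= Nmx R B k)%MS.
  apply/row_subP => i; set y := row i K.
  have yA : y *m (Amx S)^T = 0 by rewrite /y -row_mul mulmx_ker row0.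
  have oy : ortho y.
    move=> c sc; have /submxP [D eD] := allsub c sc.
    have : (y *m (cv c)^T) 0 0 = 0 by rewrite eD trmx_mul mulmxA yA mul0mx mxE.
    move=> h; rewrite -[RHS]h mxE; apply: eq_bigr => j _; by rewrite !mxE.
  have [phi ->] := potential hsc oy nVpos.
  exact: submxMl.
have := mxrankS KN; rewrite mxrank_ker mxrank_tr (eqP rf).
have := rank_Nmx nVpos; have := nV_le_nE R hsc hE; lia.
Qed.

Lemma extend S c : row_free (Amx S) -> ~~ (cv c <= Amx S)%MS -> row_free (Amx (c :: S)).
Proof.
move=> rf nc.
have sub : (cv c + Amx S <= Amx (c :: S))%MS.
  rewrite addsmx_sub; apply/andP; split.
    by apply: (eq_row_sub ord0); rewrite rowK.
  apply/row_subP => i; apply: (eq_row_sub (lift ord0 i)).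
  by rewrite !rowK lift0.
have lt : (\rank (Amx S) < \rank (cv c + Amx S))%N.
  rewrite (ltn_leqif (mxrank_leqif_sup (addsmxSr _ _))).
  apply/negP => h; move/negP: nc; apply; exact: (submx_trans (addsmxSl (cv c) (Amx S)) h).
have := mxrankS sub; rewrite /row_free eqn_leq rank_leq_row /=.
move: lt; rewrite (eqP rf) /=; lia.
Qed.

Lemma indep_ex m : (m <= nE - nV + 1)%N -> exists S, [/\ size S = m,
  all (simple_cycle B k) S & row_free (Amx S)].
Proof.
elim: m => [|m IH] hm.
  exists [::]; split => //; rewrite /row_free.
  by have := rank_leq_row (Amx [::]); rewrite leqn0.
have [S [sS aS rf]] := IH (ltnW hm).
have szS : (size S < nE - nV + 1)%N by rewrite sS.
have [c [sc nc]] := grow aS rf szS.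
exists (c :: S); split; first by rewrite /= sS.
  by rewrite /= sc aS.
exact: extend rf nc.
Qed.


Lemma graph_main : exists d : nat, @is_affdim R nE (@cycle_polytope R B k) d /\
  (d%:Z = nE%:Z - nV%:Z)%R.
Proof.
have hle := nV_le_nE R hsc hE.
exists (nE - nV)%N; split; last by rewrite subzn.
split.
  have [S [sS aS rf]] := indep_ex (leqnn (nE - nV + 1)).
  pose x (i : 'I_(nE - nV).+1) := cv (nth [::] S i).
  exists x; split.
    move=> i; exists 1%N, (fun _ => x i), (fun _ => 1); split => //.
    - move=> _; exists (nth [::] S i); split => //.
      by apply: (all_nthP [::] aS); rewrite sS addn1 ltn_ord.
    - by rewrite big_ord1.
    - by rewrite big_ord1 scale1r.
  rewrite /aff_indep; set D := \matrix_(i < nE - nV) _.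
  have sub : (Amx S <= x ord0 + D)%MS.
    apply/row_subP => r; rewrite rowK.
    case: r => [[|i] hr] /=.
      exact: addsmxSl.
    have hi : (i < nE - nV)%N by move: hr; rewrite sS addn1 ltnS.
    have -> : cv (nth [::] S i.+1) = (x (lift ord0 (Ordinal hi)) - x ord0) + x ord0.
      by rewrite subrK /x lift0.
    apply: addmx_sub; last exact: addsmxSl.
    apply: submx_trans (addsmxSr (x ord0) D).
    by apply: (eq_row_sub (Ordinal hi)); rewrite rowK.
  have := mxrankS sub; rewrite (eqP rf) sS.
  have := mxrank_adds_leqif (x ord0) D; move/leqifP.
  have := rank_leq_row (x ord0); have := rank_leq_row D.
  rewrite /row_free; case: ifP => _ ?; lia.
move=> e x hx hai; apply: (upper hsc hE (x := x)) => // i.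
exact: poly_good (hx i).
Qed.

End Lower.

Local Close Scope ring_scope.

Lemma part1 (R : realFieldType) (k : nat) (B : seq nat -> Prop) :
      (1 <= k)%N ->
      (forall b, B b -> (0 < size b)%N /\ is_perm b) ->
      (exists s, inAv B s) ->
      closed_dsum B \/ closed_ssum B ->
      ov_conclusion R B k.
Proof.
move=> k1 hB ex cl.
have hsc := strong_conn k1 cl.
have hE := Av_nonempty hB cl ex k.
split => //; exact: graph_main hsc hE.
Qed.

Theorem mainTheorem2 (R : realFieldType) :
  (forall (k : nat) (B : seq nat -> Prop),
      (1 <= k)%N ->
      (forall b, B b -> (0 < size b)%N /\ is_perm b) ->
      (exists s, inAv B s) ->
      closed_dsum B \/ closed_ssum B ->
      ov_conclusion R B k) /\
  (forall (k : nat) (tau : seq nat),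
      (1 <= k)%N -> is_perm tau -> (2 <= size tau)%N ->
      ov_conclusion R (fun b => b = tau) k).
Proof.
split; first by move=> k B; exact: part1.
move=> k tau k1 pt st; apply: part1 => //.
- by move=> b ->; split => //; lia.
- exists [:: 1]; split => // pi -> [m [_ E]].
  have : (size tau <= 1)%N.
    by rewrite -E size_std (size_subseq (mask_subseq m [:: 1])).
  lia.
- exact: single_closed.
Qed.
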